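(* Let $G$ be a simple graph of order $n$. If $$\mu(G) > -\frac{1}{2}+\sqrt{\left(n-\frac{3}{2}\right)^2+2},$$ then $G$ is Hamilton-connected unless $G=K_{n-1}+e+e'$.
   Context: For a simple graph $G$, $\mu(G)$ denotes the largest eigenvalue (spectral radius) of the adjacency matrix $A(G)$. A graph is Hamilton-connected if every two distinct vertices are joined by a Hamiltonian path (a path containing all vertices). $K_{n-1}+e+e'$ denotes the graph obtained from the complete graph $K_{n-1}$ by adding one new vertex and joining it by two edges $e,e'$ to two vertices of $K_{n-1}$. *)

(* Defs.v *)
From HB Require Import structures.
From mathcomp Require Import all_boot all_order fingroup perm all_algebra.
Set Implicit Arguments. Unset Strict Implicit. Unset Printing Implicit Defensive.
Import Order.TTheory GRing.Theory Num.Theory.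
Local Open Scope ring_scope.

Definition simple_graph (n : nat) (e : rel 'I_n) : Prop :=
  symmetric e /\ irreflexive e.

Definition adjmx (R : nzRingType) (n : nat) (e : rel 'I_n) : 'M[R]_n :=
  \matrix_(i, j) (e i j)%:R.

Definition largest_eigenvalue (F : numFieldType) (n : nat) (A : 'M[F]_n)
  (mu : F) : Prop :=
  eigenvalue A mu /\ forall l, eigenvalue A l -> l <= mu.

Definition ham_path (n : nat) (e : rel 'I_n) (u v : 'I_n) (s : seq 'I_n)
  : Prop :=
  [/\ path e u s, last u s = v, uniq (u :: s) & forall x, x \in u :: s].

Definition hamilton_connected (n : nat) (e : rel 'I_n) : Prop :=
  forall u v : 'I_n, u != v -> exists s, ham_path e u v s.

(* K_{n-1} + e + e' on 'I_n: vertices 0..n-2 form a clique, and vertex n-1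
   is joined exactly to vertices 0 and 1. *)
Definition Kn1ee (n : nat) : rel 'I_n := fun i j =>
  (i != j) &&
  (if (i == n.-1 :> nat) then (j < 2)%N
   else if (j == n.-1 :> nat) then (i < 2)%N else true).

Definition isomorphic (n : nat) (e1 e2 : rel 'I_n) : Prop :=
  exists f : {perm 'I_n}, forall x y, e1 x y = e2 (f x) (f y).

(* Main.v *)
Require Import Defs.
From HB Require Import structures.
From mathcomp Require Import all_boot all_order fingroup perm all_algebra.
From mathcomp Require Import zify ring lra.
Import Order.TTheory GRing.Theory Num.Theory.
Local Open Scope ring_scope.
Set Implicit Arguments. Unset Strict Implicit. Unset Printing Implicit Defensive.
Local Close Scope ring_scope.

Definition deg n (e : rel 'I_n) (i : 'I_n) : nat := \sum_(j < n) (e i j : nat).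
Definition Dsum n (e : rel 'I_n) : nat := \sum_(i < n) deg e i.

Lemma sum_ind1 n (i : 'I_n) : \sum_(j < n) ((j == i) : nat) = 1%N.
Proof. by rewrite (bigD1 i) //= eqxx big1 // => j /negbTE ->. Qed.

Lemma sumD1 n (F : 'I_n -> nat) x : \sum_(i < n) F i = F x + \sum_(i < n | i != x) F i.
Proof. by rewrite (bigD1 x). Qed.

Lemma sumD1P n (P : pred 'I_n) (F : 'I_n -> nat) x : P x ->
  \sum_(i < n | P i) F i = F x + \sum_(i < n | P i && (i != x)) F i.
Proof. by move=> Px; rewrite (bigD1 x). Qed.

Lemma sum_one n : \sum_(j < n) 1 = n.
Proof. by rewrite sum_nat_const card_ord muln1. Qed.

Lemma big2 n (F : 'I_n -> nat) a b : a != b ->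
  \sum_(i < n) F i = F a + F b + \sum_(i < n | (i != a) && (i != b)) F i.
Proof.
move=> ab; rewrite (bigD1 a) //= (bigD1 b) //=; last by rewrite eq_sym.
by rewrite addnA.
Qed.

Lemma card_out2 n (a b : 'I_n) : a != b ->
  \sum_(i < n | (i != a) && (i != b)) 1 = n - 2.
Proof. move=> ab; have := big2 (fun _ => 1) ab; rewrite [in X in X = _]sum_one => h; lia. Qed.

Lemma deg_sym n (e : rel 'I_n) : symmetric e -> forall i, \sum_(j < n) (e j i : nat) = deg e i.
Proof. by move=> sym i; apply: eq_bigr => j _; rewrite sym. Qed.


Lemma card_out1 n (x : 'I_n) : \sum_(i < n | i != x) 1 = n.-1.
Proof. have := sum_one n; rewrite (bigD1 x) //= => h; by rewrite -[in RHS]h add1n. Qed.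

Lemma sum_const_c n (P : pred 'I_n) c : \sum_(i < n | P i) c = (\sum_(i < n | P i) 1) * c.
Proof. by rewrite big_distrl /=; apply: eq_bigr => *; rewrite mul1n. Qed.

Lemma sum_le_ne n (e : rel 'I_n) (irr : irreflexive e) (P : pred 'I_n) i : P i ->
  \sum_(j < n | P j) (e i j : nat) + 1 <= \sum_(j < n | P j) 1.
Proof.
move=> Pi; rewrite (bigD1 i) //= irr add0n [X in _ <= X](bigD1 i) //= addnC.
rewrite leq_add2l; by apply: leq_sum => j _; case: (e i j).
Qed.

Lemma deg_le n (e : rel 'I_n) : irreflexive e -> forall i, deg e i <= n.-1.
Proof.
move=> irr i; have := sum_le_ne irr (P := xpredT) (i := i) erefl.
rewrite /deg sum_one => h; lia.
Qed.

Lemma two_bound n (e : rel 'I_n) : symmetric e -> irreflexive e -> forall a b, a != b ->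
  Dsum e + 2 * e a b <= 2 * (deg e a + deg e b) + (n-2)*(n-3).
Proof.
move=> sym irr a b ab.
have Ha : deg e a = e b a + \sum_(i < n | (i != a) && (i != b)) (e i a : nat).
  by rewrite -(deg_sym sym) (big2 _ ab) irr.
have Hb : deg e b = e a b + \sum_(i < n | (i != a) && (i != b)) (e i b : nat).
  by rewrite -(deg_sym sym) (big2 _ ab) irr addn0.
have Hi : forall i, (i != a) && (i != b) ->
    deg e i <= e i a + e i b + (n - 3).
  move=> i Pi; rewrite /deg (big2 _ ab).
  have := sum_le_ne irr (P := fun j => (j != a) && (j != b)) Pi; rewrite card_out2 // => h.
  have h2 : \sum_(j < n | (j != a) && (j != b)) (e i j : nat) + 1 <= n - 2 := h. lia.
rewrite /Dsum (big2 _ ab).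
have S : \sum_(i < n | (i != a) && (i != b)) deg e i <=
   \sum_(i < n | (i != a) && (i != b)) (e i a : nat) + \sum_(i < n | (i != a) && (i != b)) (e i b : nat)
   + (n-2)*(n-3).
  rewrite -big_split /= -(card_out2 ab) -sum_const_c -big_split /=.
  by apply: leq_sum => i Pi; apply: Hi.
rewrite (sym b a) in Ha; lia.
Qed.

Lemma one_bound n (e : rel 'I_n) : symmetric e -> irreflexive e -> forall x,
  Dsum e <= 2 * deg e x + (n-1)*(n-2).
Proof.
move=> sym irr x.
have Hi : forall i, i != x -> deg e i <= e i x + (n-2).
  move=> i ix; rewrite /deg (sumD1 _ x).
  have := sum_le_ne irr (P := fun j => j != x) ix; rewrite card_out1 /= => h; lia.
have Hx : deg e x = \sum_(i < n | i != x) (e i x : nat).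
  by rewrite -(deg_sym sym) (sumD1 _ x) irr.
rewrite /Dsum (sumD1 _ x).
have S : \sum_(i < n | i != x) deg e i <= \sum_(i < n | i != x) (e i x : nat) + (n-1)*(n-2).
  have -> : n - 1 = \sum_(i < n | i != x) 1 by rewrite card_out1; lia.
  rewrite -sum_const_c -big_split /=; apply: leq_sum => i ix; exact: Hi.
lia.
Qed.

Lemma one_bound_strict n (e : rel 'I_n) : symmetric e -> irreflexive e -> forall x a b,
  a != x -> b != x -> a != b -> ~~ e a b ->
  Dsum e + 1 <= 2 * deg e x + (n-1)*(n-2).
Proof.
move=> sym irr x a b ax bx ab nab.
have Hi : forall i, i != x -> deg e i <= e i x + (n-2).
  move=> i ix; rewrite /deg (sumD1 _ x).
  have := sum_le_ne irr (P := fun j => j != x) ix; rewrite card_out1 /= => h; lia.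
have Ha : deg e a + 1 <= e a x + (n-2).
  rewrite /deg (sumD1 _ x) (sumD1P _ (P := fun j => j != x) bx) /= (negbTE nab) add0n.
  have := sum_le_ne irr (P := fun j => (j != x) && (j != b)) (i := a).
  rewrite /= ax ab => /(_ erefl) h1.
  have := card_out1 x; rewrite (sumD1P _ (P := fun j => j != x) bx) /= => h2; lia.
have Hx : deg e x = \sum_(i < n | i != x) (e i x : nat).
  by rewrite -(deg_sym sym) (sumD1 _ x) irr.
rewrite /Dsum (sumD1 _ x).
have S : \sum_(i < n | i != x) deg e i + 1 <= \sum_(i < n | i != x) (e i x : nat) + (n-1)*(n-2).
  have -> : n - 1 = \sum_(i < n | i != x) 1 by rewrite card_out1; lia.
  rewrite -sum_const_c (sumD1P (deg e) (P := fun j => j != x) ax) /=.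
  rewrite (sumD1P (fun i => (e i x : nat)) (P := fun j => j != x) ax) /=.
  rewrite (sumD1P (fun i => n - 2) (P := fun j => j != x) ax) /=.
  have : \sum_(i < n | (i != x) && (i != a)) deg e i <=
     \sum_(i < n | (i != x) && (i != a)) (e i x + (n-2)).
    by apply: leq_sum => i /andP[ix _]; exact: Hi.
  rewrite big_split /=; lia.
lia.
Qed.

Definition SN n (e : rel 'I_n) u := \sum_(k < n) e u k * deg e k.

Lemma Dsum_le n (e : rel 'I_n) : irreflexive e -> Dsum e <= n * n.-1.
Proof.
move=> irr; rewrite /Dsum -[X in _ <= X * _](sum_one n) big_distrl /=.
by apply: leq_sum => i _; rewrite mul1n deg_le.
Qed.

Lemma Dsum_ge n (e : rel 'I_n) c : (forall k, c <= deg e k) -> n * c <= Dsum e.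
Proof.
move=> H; rewrite /Dsum -[X in X * _](sum_one n) big_distrl /=.
by apply: leq_sum => i _; rewrite mul1n H.
Qed.

Lemma Dsum_even n (e : rel 'I_n) : symmetric e -> irreflexive e -> ~~ odd (Dsum e).
Proof.
move=> sym irr.
have -> : Dsum e = (\sum_(i < n) \sum_(j < n) ((e i j) && (i < j) : nat)).*2.
  rewrite -addnn {1}/Dsum /deg.
  have E : forall i j, (e i j : nat) = ((e i j) && (i < j) : nat) + ((e j i) && (j < i) : nat).
    move=> i j; rewrite (sym j i); case: (ltngtP i j) => [h|h|/val_inj ->]; rewrite ?irr //=.
      by rewrite andbT andbF addn0.
    by rewrite andbT andbF.
  under eq_bigr do under eq_bigr do rewrite E.
  under eq_bigr do rewrite big_split /=.
  rewrite big_split /=; congr (_ + _); exact: exchange_big.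
by rewrite odd_double.
Qed.

Lemma SN_bound n (e : rel 'I_n) u : irreflexive e -> SN e u + deg e u <= Dsum e.
Proof.
move=> irr; rewrite /SN /Dsum (sumD1 _ u) (sumD1 _ u) irr /= add0n addnC.
rewrite leq_add2l; apply: leq_sum => k _; case: (e u k) => /=; rewrite ?mul1n ?mul0n //.
Qed.

Lemma deg_lt2 n (e : rel 'I_n) u k : irreflexive e -> k != u -> ~~ e u k -> deg e u + 2 <= n.
Proof.
move=> irr ku nuk.
have := sum_le_ne irr (P := fun j => j != k) (i := u); rewrite eq_sym ku => /(_ erefl).
rewrite card_out1 /= => h.
have hd : deg e u = \sum_(j < n | j != k) (e u j : nat) by rewrite /deg (sumD1 _ k) (negbTE nuk).
have h' : \sum_(j < n | j != k) (e u j : nat) + 1 <= n.-1 := h.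
have := ltn_ord k; rewrite hd; lia.
Qed.

Lemma univ_common n (e : rel 'I_n) u : symmetric e -> irreflexive e ->
  (forall k, k != u -> e u k) -> forall w, \sum_(k < n) (e u k * e k w) + e u w = deg e w.
Proof.
move=> sym irr H w; rewrite -(deg_sym sym) (sumD1 _ u) (sumD1 _ u) irr /=.
rewrite add0n addnC; congr (_ + _); apply: eq_bigr => k ku; by rewrite H ?mul1n.
Qed.

Lemma SN_univ n (e : rel 'I_n) u : irreflexive e -> (forall k, k != u -> e u k) ->
  SN e u + deg e u = Dsum e.
Proof.
move=> irr H; rewrite /SN /Dsum (sumD1 _ u) (sumD1 _ u) irr /= add0n addnC.
congr (_ + _); apply: eq_bigr => k ku; by rewrite H ?mul1n.
Qed.

Lemma common n (e : rel 'I_n) a b : symmetric e ->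
  deg e a + deg e b <= n + \sum_(k < n) (e a k * e k b).
Proof.
move=> sym.
have H1 : \sum_(k < n) (1 + e a k * e k b) = n + \sum_(k < n) (e a k * e k b).
  by rewrite big_split sum_one.
rewrite -H1 /deg -big_split /=; apply: leq_sum => k _.
by rewrite (sym k b); case: (e a k); case: (e b k).
Qed.

Lemma SN_nonuniv n (e : rel 'I_n) u : irreflexive e -> (forall k, 3 <= deg e k) ->
  SN e u + deg e u + 3 * (n.-1 - deg e u) <= Dsum e.
Proof.
move=> irr H.
have cnt : \sum_(k < n) ((k != u) && ~~ e u k : nat) + deg e u = n.-1.
  rewrite -(card_out1 u) /deg (sumD1 _ u) eqxx /= add0n.
  rewrite (sumD1 _ u) irr add0n -big_split /=.
  apply: eq_bigr => k ku; rewrite ku /=; by case: (e u k).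
have : SN e u + deg e u + 3 * \sum_(k < n) ((k != u) && ~~ e u k : nat) <= Dsum e.
  rewrite /SN /Dsum big_distrr /= (sumD1 (fun k => e u k * deg e k) u) irr /= add0n.
  rewrite (sumD1 (fun k => 3 * ((k != u) && ~~ e u k)) u) eqxx /= muln0 add0n.
  rewrite (sumD1 _ u) [_ + deg e u]addnC -addnA leq_add2l -big_split /=.
  apply: leq_sum => k ku; rewrite ku /=; case: (e u k) => /=; first by rewrite mul1n addn0.
  by rewrite mul0n muln1 add0n H.
lia.
Qed.

Local Close Scope ring_scope.

Fixpoint pairs (T : Type) (s : seq T) : seq (T * T) :=
  match s with
  | a :: ((b :: _) as t) => (a, b) :: pairs t
  | _ => [::]
  end.

Lemma size_pairs T (s : seq T) : size (pairs s) = (size s).-1.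
Proof. by elim: s => [|a [|b t] IH] //=; rewrite IH. Qed.

Lemma count_pairs1 T (P : pred T) (t : seq T) a :
  count (fun p => P p.1) (pairs (a :: t)) + P (last a t) = count P (a :: t).
Proof.
elim: t a => [|b t IH] a /=; first by rewrite addn0.
by rewrite -addnA IH.
Qed.

Lemma count_pairs2 T (P : pred T) (t : seq T) a :
  count (fun p => P p.2) (pairs (a :: t)) + P a = count P (a :: t).
Proof.
elim: t a => [|b t IH] a /=; first by rewrite addn0.
have := IH b; rewrite /= => <-; lia.
Qed.

Lemma mem_pairs_split (T : eqType) (s : seq T) p :
  p \in pairs s -> exists l r, s = l ++ p.1 :: p.2 :: r.
Proof.
elim: s => [|a [|b t] IH] //=; rewrite inE => /orP[/eqP -> | /IH [l [r ->]]].
  by exists [::], t.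
by exists (a :: l), r.
Qed.

Lemma sorted_rev_sym T (e : rel T) : symmetric e -> forall s, sorted e (rev s) = sorted e s.
Proof.
move=> sym s; rewrite rev_sorted; case: s => // a t /=.
by apply: eq_path => x y; rewrite sym.
Qed.

Lemma sorted_catc T (e : rel T) s1 z s2 :
  sorted e (s1 ++ z :: s2) = sorted e (rcons s1 z) && path e z s2.
Proof.
case: s1 => [|a s1] //=; rewrite cat_path rcons_path /=; by rewrite andbA.
Qed.

Local Close Scope ring_scope.

Definition addE (T : eqType) (e : rel T) x y : rel T :=
  fun a b => e a b || ((a == x) && (b == y)) || ((a == y) && (b == x)).

Lemma sorted_avoid (T : eqType) (e : rel T) x y s :
  sorted (addE e x y) s -> (x \notin s) || (y \notin s) -> sorted e s.
Proof.
case: s => // a t /= P /orP[] nin.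
  apply: (sub_in_path (P := predC1 x)) P; last by rewrite all_predC has_pred1.
  move=> u w /= ux wx; rewrite /addE (negbTE ux) (negbTE wx) /=.
  by rewrite andbF !orbF.
apply: (sub_in_path (P := predC1 y)) P; last by rewrite all_predC has_pred1.
move=> u w /= uy wy; rewrite /addE (negbTE uy) (negbTE wy) /=.
by rewrite andbF !orbF.
Qed.

Lemma decomp (T : eqType) (e : rel T) x y u s : path (addE e x y) u s ->
  path e u s \/ (exists l1 l2, u :: s = rcons l1 x ++ y :: l2)
             \/ (exists l1 l2, u :: s = rcons l1 y ++ x :: l2).
Proof.
elim: s u => [|b t IH] u /=; first by left.
case/andP => eub P.
case Eub : (e u b).
  case: (IH _ P) => [P'|[[l1 [l2 E]]|[l1 [l2 E]]]].
  - by left; rewrite P'.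
  - by right; left; exists (u :: l1), l2; rewrite E.
  - by right; right; exists (u :: l1), l2; rewrite E.
move: eub; rewrite /addE Eub /= => /orP[/andP[/eqP -> /eqP ->]|/andP[/eqP -> /eqP ->]].
  by right; left; exists [::], t.
by right; right; exists [::], t.
Qed.

Lemma count_deg n (e : rel 'I_n) (q : seq 'I_n) a :
  uniq q -> (forall z, z \in q) -> count (e a) q = deg e a.
Proof.
move=> U C; have P : perm_eq q (index_enum 'I_n).
  by apply: uniq_perm => //; [exact: index_enum_uniq | move=> z; rewrite C mem_index_enum].
rewrite (seq.permP P) /deg big_mkcond /= -sum1_count big_mkcond /=.
by apply: eq_bigr => j _; case: (e a j).
Qed.

Lemma size_all n (q : seq 'I_n) :
  uniq q -> (forall z, z \in q) -> size q = n.
Proof.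
move=> U C; have P : perm_eq q (index_enum 'I_n).
  by apply: uniq_perm => //; [exact: index_enum_uniq | move=> z; rewrite C mem_index_enum].
rewrite -count_predT (seq.permP P) -sum1_count.
by rewrite -[RHS](sum_one n).
Qed.

Lemma head_rcons_cat (T : Type) (x d : T) l1 s : head d (rcons l1 x ++ s) = head d (rcons l1 x).
Proof. by case: l1. Qed.

Lemma core n (e : rel 'I_n) x y l1 l2 : symmetric e -> irreflexive e -> ~~ e x y ->
  n < deg e x + deg e y -> uniq (rcons l1 x ++ y :: l2) ->
  (forall z, z \in rcons l1 x ++ y :: l2) -> sorted e (rcons l1 x) -> sorted e (y :: l2) ->
  exists q, [/\ perm_eq q (rcons l1 x ++ y :: l2), sorted e q,
     head x q = head x (rcons l1 x ++ y :: l2) & last x q = last x (rcons l1 x ++ y :: l2)].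
Proof.
move=> sym irr nxy dxy U C S1 S2.
set q := rcons l1 x ++ y :: l2.
set ps1 := pairs (rcons l1 x); set ps2 := pairs (y :: l2).
pose A := fun p : 'I_n * 'I_n => e x p.1.
pose B := fun p : 'I_n * 'I_n => e y p.2.
have hA1 : count A ps1 = count (e x) (rcons l1 x).
  rewrite /ps1; clear -irr; case: l1 => [|a t] /=; first by rewrite irr.
  by have := count_pairs1 (e x) (rcons t x) a; rewrite last_rcons irr addn0.
have hB1 : count (e y) (rcons l1 x) <= count B ps1 + 1.
  rewrite /ps1; clear -irr; case: l1 => [|a t] /=; first by case: (e y x).
  by have := count_pairs2 (e y) (rcons t x) a; rewrite /= => h; rewrite -h leq_add2l; case: (e y a).
have hA2 : count (e x) (y :: l2) <= count A ps2 + 1.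
  by have := count_pairs1 (e x) l2 y => <-; rewrite leq_add2l; case: (e x _).
have hB2 : count B ps2 = count (e y) (y :: l2).
  by have := count_pairs2 (e y) l2 y; rewrite irr addn0.
have hx : count (e x) q = deg e x by exact: count_deg.
have hy : count (e y) q = deg e y by exact: count_deg.
have hsz : size q = n by exact: size_all.
have sz1 : size ps1 = size l1 by rewrite /ps1 size_pairs size_rcons.
have sz2 : size ps2 = size l2 by rewrite /ps2 size_pairs.
have hsq : size q = size l1 + size l2 + 2 by rewrite /q size_cat size_rcons /=; lia.
rewrite /q count_cat in hx; rewrite /q count_cat in hy.
have hUI := count_predUI A B (ps1 ++ ps2).
have hU : count (predU A B) (ps1 ++ ps2) <= size (ps1 ++ ps2) by exact: count_size.
rewrite !count_cat size_cat in hUI hU.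
have : has (predI A B) (ps1 ++ ps2).
  rewrite has_count count_cat; lia.
case/hasP => pr; rewrite mem_cat => /orP[] Hin /andP[Ap Bp].
-
  have [l [r E]] := mem_pairs_split Hin.
  case: pr Ap Bp E {Hin} => p p' /= Ap Bp E; rewrite /A /B /= in Ap Bp.
  exists (l ++ p :: rev (p' :: r) ++ y :: l2).
  have Eq : q = l ++ p :: p' :: r ++ y :: l2 by rewrite /q E -catA.
  have lastx : last p' r = x.
    by have := congr1 (last x) E; rewrite last_rcons last_cat /=.
  move: S1; rewrite E sorted_catc /= => /andP[Sl /andP[pp' Pr]].
  rewrite Eq; split.
  + apply/seq.permP => a; rewrite !(count_cat, count_rev) /= !(count_cat, count_rev) /=; lia.
  + rewrite sorted_catc Sl /= cat_path rev_cons last_rcons /=.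
    have -> : path e p (rcons (rev r) p') = sorted e (rev (rcons (p' :: r) p)).
      by rewrite rev_rcons rev_cons.
    rewrite sorted_rev_sym // /= rcons_path Pr lastx Ap sym Bp /=.
    by move: S2.
  + by case: l {E Sl Eq}.
  + by rewrite !last_cat /= !last_cat /=.
-
  have [l [r E]] := mem_pairs_split Hin.
  case: pr Ap Bp E {Hin} => p p' /= Ap Bp E; rewrite /A /B /= in Ap Bp.
  case: l E => [|l0 lt] E.
    by case: E => yp; move: Ap; rewrite -yp (negbTE nxy).
  case: E => yl0 El2.
  exists (rcons l1 x ++ p :: rev (l0 :: lt) ++ p' :: r).
  have Eq : q = rcons l1 x ++ l0 :: lt ++ p :: p' :: r by rewrite /q El2 yl0.
  move: S2; rewrite El2 -[y :: _]/((y :: lt) ++ p :: p' :: r) sorted_catc /=.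
  case/andP => Sl /andP[pp' Pr].
  rewrite Eq; split.
  + apply/seq.permP => a; rewrite !(count_cat, count_rev) /= !(count_cat, count_rev) /=; lia.
  + rewrite -cats1 -catA cat1s sorted_catc -/(rcons l1 x) S1 /= Ap /= cat_path.
    rewrite rev_cons last_rcons -rev_cons -yl0 /= Bp Pr andbT.
    have -> : path e p (rev (y :: lt)) = sorted e (rev (rcons (y :: lt) p)) by rewrite rev_rcons.
    by rewrite sorted_rev_sym // /= Sl.
  + by rewrite !head_rcons_cat.
  + by rewrite !(last_cat, last_cons).
Qed.

Lemma ham_of_list n (e : rel 'I_n) u v s q d :
  perm_eq q (u :: s) -> sorted e q -> head d q = u -> last d q = last u s ->
  last u s = v -> uniq (u :: s) -> (forall z, z \in u :: s) -> exists s', ham_path e u v s'.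
Proof.
move=> P S H L Lv U C.
case: q P S H L => [|u' s'] P S /= H L.
  by have := perm_size P.
rewrite H in P S L *; exists s'; split => //.
- by rewrite L.
- by rewrite (perm_uniq P).
- by move=> z; rewrite (perm_mem P).
Qed.

Lemma closure_case n (e : rel 'I_n) x y u v s l1 l2 : symmetric e -> irreflexive e -> ~~ e x y ->
  n < deg e x + deg e y -> ham_path (addE e x y) u v s ->
  u :: s = rcons l1 x ++ y :: l2 -> exists s', ham_path e u v s'.
Proof.
move=> sym irr nxy dxy Hs E; have [P L U C] := Hs.
have S' : sorted (addE e x y) (rcons l1 x ++ y :: l2) by rewrite -E.
rewrite cat_rcons sorted_catc /= in S'; case/andP: S' => S1 /andP[_ S2].
have U' : uniq (rcons l1 x ++ y :: l2) by rewrite -E.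
have S1e : sorted e (rcons l1 x).
  apply: (sorted_avoid S1); apply/orP; right.
  by move: U'; rewrite cat_uniq => /and3P[_ /hasPn /(_ y) + _]; apply; rewrite inE eqxx.
have S2e : sorted e (y :: l2).
  apply: (@sorted_avoid _ e x y (y :: l2) S2); apply/orP; left.
  apply/negP => xin; move: U'; rewrite cat_uniq => /and3P[_ /hasPn /(_ x xin) + _].
  by rewrite mem_rcons inE eqxx.
have C' : forall z, z \in rcons l1 x ++ y :: l2 by move=> z; rewrite -E.
have [q [Pq Sq Hq Lq]] := core sym irr nxy dxy U' C' S1e S2e.
apply: (ham_of_list (q := q) (d := x)) => //; first by rewrite E.
- by rewrite Hq -E.
- by rewrite Lq -E.
- by [].
- by [].
Qed.

Lemma ham_path_ext n (e1 e2 : rel 'I_n) u v s : e1 =2 e2 -> ham_path e1 u v s -> ham_path e2 u v s.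
Proof. by move=> E [P L U C]; split => //; rewrite -(eq_path E). Qed.

Lemma closure n (e : rel 'I_n) x y : symmetric e -> irreflexive e -> ~~ e x y ->
  n < deg e x + deg e y -> hamilton_connected (addE e x y) -> hamilton_connected e.
Proof.
move=> sym irr nxy dxy H u v uv.
have [s Hs] := H u v uv; have [P L U C] := Hs.
case: (decomp P) => [Pe|[[l1 [l2 E]]|[l1 [l2 E]]]].
- by exists s.
- exact: (closure_case sym irr nxy dxy Hs E).
- apply: (closure_case (x := y) (y := x) sym irr _ _ _ E).
  + by rewrite sym.
  + by rewrite addnC.
  + apply: ham_path_ext Hs => a b; rewrite /addE; case: (e a b) => //=.
    by rewrite orbC.
Qed.

Lemma path_complete (T : eqType) (e : rel T) x s : (forall a b, a != b -> e a b) ->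
  uniq (x :: s) -> path e x s.
Proof.
move=> He; elim: s x => [|y t IH] x //= /andP[xnin /andP[ynin Ut]].
rewrite He ?IH //=; first by rewrite ynin.
by move: xnin; rewrite inE negb_or => /andP[].
Qed.

Lemma complete_hc n (e : rel 'I_n) : (forall a b, a != b -> e a b) -> hamilton_connected e.
Proof.
move=> He u v uv.
set F := [seq w <- enum 'I_n | (w != u) && (w != v)].
have Uq : uniq (u :: F ++ [:: v]).
  rewrite cons_uniq mem_cat mem_filter eqxx /= inE (negbTE uv) /=.
  rewrite cat_uniq filter_uniq ?enum_uniq //= andbT orbF.
  by rewrite mem_filter eqxx andbF.
exists (F ++ [:: v]); split => //.
- exact: path_complete.
- by rewrite last_cat.
- move=> z; rewrite inE mem_cat mem_filter mem_enum inE andbT.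
  by rewrite inE; case: (z =P u); case: (z =P v).
Qed.

Definition NE n (e : rel 'I_n) := [set p : 'I_n * 'I_n | (p.1 != p.2) && ~~ e p.1 p.2].

Lemma deg_mono n (e e' : rel 'I_n) : (forall a b, e a b -> e' a b) -> forall a, deg e a <= deg e' a.
Proof.
move=> H a; apply: leq_sum => j _.
by case E: (e a j) => //=; rewrite (H _ _ E).
Qed.

Lemma ore n (e : rel 'I_n) : symmetric e -> irreflexive e ->
  (forall a b, a != b -> ~~ e a b -> n < deg e a + deg e b) -> hamilton_connected e.
Proof.
have [k] := ubnP #|NE e|; elim: k e => // k IH e Hk sym irr Hdeg.
case: (set_0Vmem (NE e)) => [E0 | [[x y] Hxy]].
  apply: complete_hc => a b ab; apply/negPn/negP => nab.
  have : (a, b) \in NE e by rewrite inE /= ab.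
  by rewrite E0 inE.
move: (Hxy); rewrite inE /= => /andP[xy nxy].
set e' := addE e x y.
have sub : forall a b, e a b -> e' a b by move=> a b h; rewrite /e' /addE h.
have sym' : symmetric e'.
  move=> a b; rewrite /e' /addE sym; case: (e b a) => //=.
  by rewrite orbC andbC [(b == y) && _]andbC.
have irr' : irreflexive e'.
  move=> a; rewrite /e' /addE irr /=.
  apply/negP => /orP[] /andP[/eqP -> /eqP E]; by rewrite E eqxx in xy.
have Hdeg' : forall a b, a != b -> ~~ e' a b -> n < deg e' a + deg e' b.
  move=> a b ab nab.
  have nab0 : ~~ e a b by apply: contra nab; exact: sub.
  have := Hdeg a b ab nab0; have := deg_mono sub a; have := deg_mono sub b; lia.
have Hk' : #|NE e'| < k.
  rewrite ltnS in Hk; apply: leq_trans Hk; apply: proper_card; apply/properP; split.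
    apply/subsetP => [[a b]]; rewrite !inE /= => /andP[-> nab] /=.
    by apply: contra nab; exact: sub.
  exists (x, y) => //; rewrite inE /= negb_and negbK; apply/orP; right.
  by rewrite /e' /addE !eqxx /= orbT.
apply: (closure sym irr nxy (Hdeg x y xy nxy)).
exact: IH Hk' sym' irr' Hdeg'.
Qed.

Local Close Scope ring_scope.

Lemma perm3 m (x y z a b c : 'I_m) : x != y -> x != z -> y != z ->
  a != b -> a != c -> b != c ->
  exists f : {perm 'I_m}, [/\ f x = a, f y = b & f z = c].
Proof.
move=> xy xz yz ab ac bc.
pose p1 := tperm x a; pose p2 := tperm (p1 y) b; pose p3 := tperm (p2 (p1 z)) c.
have e1 : p1 x = a by rewrite /p1 tpermL.
have y1a : p1 y != a by rewrite -e1 (inj_eq (@perm_inj _ p1)) eq_sym.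
have e2 : p2 (p1 y) = b by rewrite /p2 tpermL.
have e2a : p2 a = a by rewrite /p2 tpermD // eq_sym.
have z2a : p2 (p1 z) != a.
  by rewrite -{1}e2a -e1 !(inj_eq (@perm_inj _ _)) eq_sym.
have z2b : p2 (p1 z) != b.
  by rewrite -e2 !(inj_eq (@perm_inj _ _)) eq_sym.
exists (p1 * p2 * p3)%g; rewrite !permM; split.
- by rewrite e1 e2a /p3 tpermD // eq_sym.
- by rewrite e2 /p3 tpermD // eq_sym.
- by rewrite /p3 tpermL.
Qed.

Lemma iso_case n (e : rel 'I_n) x y z : symmetric e -> irreflexive e -> y != z ->
  (forall j, e x j = (j == y) || (j == z)) ->
  (forall a b, a != x -> b != x -> a != b -> e a b) -> isomorphic e (@Kn1ee n).
Proof.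
move=> sym irr yz Hx Hcl.
have xy : x != y by apply/eqP => E; have := Hx y; rewrite -E irr eqxx.
have xz : x != z by apply/eqP => E; have := Hx z; rewrite -E irr eqxx orbT.
have n3 : 2 < n.
  case: n e x y z {sym irr Hx Hcl} yz xy xz => [|[|[|m]]] // e [[|[|[|k]]] hk] // [[|[|[|k']]] hk'] //
    [[|[|[|k'']]] hk''] //.
have o0 : 0 < n by lia.
have o1 : 1 < n by lia.
have om : n.-1 < n by lia.
pose w0 := Ordinal o0; pose w1 := Ordinal o1; pose wm := Ordinal om.
have [f [fx fy fz]] : exists f : {perm 'I_n}, [/\ f x = wm, f y = w0 & f z = w1].
  by apply: perm3 => //; rewrite -val_eqE /=; lia.
have Fm : forall a, (val (f a) == n.-1) = (a == x).
  by move=> a; rewrite -[n.-1]/(val wm) val_eqE -fx (inj_eq (@perm_inj _ f)).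
have F2 : forall a, (val (f a) < 2) = (a == y) || (a == z).
  move=> a; rewrite -(inj_eq (@perm_inj _ f) a y) -(inj_eq (@perm_inj _ f) a z) fy fz.
  rewrite -!val_eqE /=; lia.
exists f => a b; rewrite /Kn1ee (inj_eq (@perm_inj _ f)) Fm Fm F2 F2.
case: (a =P x) => [->|ax].
  rewrite Hx; case: (b =P y) => [->|_]; first by rewrite xy.
  by case: (b =P z) => [->|_]; [rewrite xz | rewrite andbF].
case: (b =P x) => [->|bx].
  by rewrite sym Hx; move/eqP: ax => ->.
case: (a =P b) => [->|ab]; first by rewrite irr.
by rewrite Hcl //; apply/eqP.
Qed.

Local Close Scope ring_scope.
Local Open Scope ring_scope.

Lemma degR (R : numDomainType) n (e : rel 'I_n) k :
  (deg e k)%:R = \sum_(w < n) ((e k w)%:R : R).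
Proof. by rewrite /deg natr_sum. Qed.

Lemma key (R : realDomainType) n (e : rel 'I_n) (x : 'I_n -> R) (mu c : R) u :
  (forall i, mu * x i = \sum_(k < n) (e i k)%:R * x k) ->
  (forall w, `|x w| <= `|x u|) -> x u != 0 ->
  (forall w, c * (e u w)%:R <= \sum_(k < n) (e u k)%:R * (e k w)%:R) ->
  mu ^+ 2 - c * mu <= \sum_(k < n) (e u k)%:R * (deg e k)%:R - c * (deg e u)%:R.
Proof.
move=> Heig Hmax xu0 HM.
pose M w := \sum_(k < n) ((e u k)%:R * (e k w)%:R : R) - c * (e u w)%:R.
have M0 : forall w, 0 <= M w by move=> w; rewrite subr_ge0.
have E1 : (mu ^+ 2 - c * mu) * x u = \sum_(w < n) M w * x w.
  rewrite mulrBl expr2 -mulrA Heig mulr_sumr -mulrA Heig mulr_sumr.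
  have -> : \sum_(w < n) M w * x w = \sum_(w < n) (\sum_(k < n) ((e u k)%:R * (e k w)%:R : R)) * x w
     - \sum_(w < n) c * (e u w)%:R * x w.
    by rewrite -sumrB; apply: eq_bigr => w _; rewrite /M mulrBl.
  congr (_ - _); last first.
    by apply: eq_bigr => w _; rewrite mulrA.
  rewrite [RHS](_ : _ = \sum_(k < n) \sum_(w < n) (e u k)%:R * (e k w)%:R * x w); last first.
    by rewrite exchange_big; apply: eq_bigr => w _; rewrite mulr_suml.
  apply: eq_bigr => k _.
  rewrite mulrCA Heig mulr_sumr; apply: eq_bigr => w _; by rewrite mulrA.
have E2 : \sum_(w < n) M w = \sum_(k < n) (e u k)%:R * (deg e k)%:R - c * (deg e u)%:R.
  rewrite /M sumrB exchange_big /= degR mulr_sumr; congr (_ - _).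
  by apply: eq_bigr => k _; rewrite degR mulr_sumr.
have pos : 0 < x u * x u by rewrite -expr2 exprn_even_gt0.
rewrite -(ler_pM2r pos) -E2 mulrA E1 mulr_suml; rewrite [X in _ <= X]mulr_suml; apply: ler_sum => w _.
rewrite -mulrA ler_wpM2l //.
apply: le_trans (ler_norm _) _; rewrite normrM.
have -> : x u * x u = `|x u| * `|x u| by rewrite -normrM ger0_norm // -expr2 sqr_ge0.
by rewrite ler_wpM2r.
Qed.

Local Close Scope ring_scope.
Local Open Scope ring_scope.

Lemma eigvec (R : rcfType) n (e : rel 'I_n) (mu : R) : symmetric e ->
  eigenvalue (adjmx R e) mu ->
  exists x : 'I_n -> R, (forall i, mu * x i = \sum_(k < n) (e i k)%:R * x k) /\
    exists u, (forall w, `|x w| <= `|x u|) /\ x u != 0.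
Proof.
move=> sym /eigenvalueP [v Ev v0].
exists (fun i => v 0 i); split.
  move=> i; have := congr1 (fun M : 'M[R]_(1, n) => M 0 i) Ev; rewrite !mxE /= => <-.
  by apply: eq_bigr => k _; rewrite mxE mulrC sym.
case: (pickP (fun j => v 0 j != 0)) => [j0 Hj0 | H0]; last first.
  case/negP: v0; apply/eqP/rowP => j; rewrite mxE.
  by move: (H0 j) => /negbFE/eqP.
case: (@arg_maxP _ R _ j0 xpredT (fun i => `|v 0 i|) isT) => u _ Hu.
exists u; split; first by move=> w; exact: Hu.
rewrite -normr_gt0; apply: lt_le_trans (Hu j0 isT); by rewrite normr_gt0.
Qed.

Lemma thresh (R : rcfType) (N mu : R) :
  - (1 / 2%:R) + Num.sqrt ((N - 3%:R / 2%:R) ^+ 2 + 2%:R) < mu ->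
  N ^+ 2 - 3 * N + 4 < mu ^+ 2 + mu.
Proof.
set a := (N - 3%:R / 2%:R) ^+ 2 + 2%:R.
have a0 : 0 <= a by rewrite /a addr_ge0 // sqr_ge0.
have s0 := sqrtr_ge0 a.
have s2 := sqr_sqrtr a0.
move: s0 s2; set s := Num.sqrt a => s0 s2 H.
have H1 : s < mu + 1 / 2%:R by lra.
have H2 : s ^+ 2 < (mu + 1 / 2%:R) ^+ 2.
  rewrite -subr_gt0 subr_sqr; apply: mulr_gt0; lra.
rewrite s2 /a in H2; nra.
Qed.

Lemma contra_univ (R : rcfType) (N mu : R) : 5 <= N ->
  N ^+ 2 - 3 * N + 4 < mu ^+ 2 + mu -> mu ^+ 2 - 2 * mu <= N ^+ 2 - 6 * N + 9 -> False.
Proof.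
move=> N5 h1 h2.
have h3 : N - 5 / 3 < mu by nra.
have h4 : N - 8 / 3 < mu - 1 by lra.
have h5 : 0 < N - 8 / 3 by lra.
nra.
Qed.

Lemma contra_nonuniv (R : rcfType) (N mu : R) : 5 <= N ->
  N ^+ 2 - 3 * N + 4 < mu ^+ 2 + mu -> mu ^+ 2 - mu <= N ^+ 2 - 5 * N + 7 -> False.
Proof.
move=> N5 h1 h2.
have h3 : N - 3 / 2 < mu by nra.
have h5 : 0 < N - 5 / 2 by lra.
nra.
Qed.

Local Close Scope ring_scope.

Lemma nn1 n : n * n.-1 + n = n * n.
Proof. by case: n => //= m; rewrite mulnS; lia. Qed.

Lemma id23 n : 3 <= n -> (n - 2) * (n - 3) + 5 * n = n * n + 6.
Proof. move=> h; have [m ->] : exists m, n = m + 3 by exists (n - 3); lia. nia. Qed.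

Lemma id12 n : 2 <= n -> (n - 1) * (n - 2) + 3 * n = n * n + 2.
Proof. move=> h; have [m ->] : exists m, n = m + 2 by exists (n - 2); lia. nia. Qed.

Lemma deg_card n (e : rel 'I_n) z : deg e z = #|[set j | e z j]|.
Proof.
rewrite /deg cardsE -sum1_card.
rewrite [RHS]big_mkcond /=; apply: eq_bigr => j _; rewrite unfold_in; by case: (e z j).
Qed.

Local Open Scope ring_scope.

Lemma sumR_SN (R : numDomainType) n (e : rel 'I_n) u :
  \sum_(k < n) (e u k)%:R * (deg e k)%:R = (SN e u)%:R :> R.
Proof. by rewrite /SN natr_sum; apply: eq_bigr => k _; rewrite natrM. Qed.

Lemma sumR_C (R : numDomainType) n (e : rel 'I_n) u w :
  \sum_(k < n) (e u k)%:R * (e k w)%:R = (\sum_(k < n) (e u k * e k w))%N%:R :> R.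
Proof. by rewrite natr_sum; apply: eq_bigr => k _; rewrite natrM. Qed.

Local Open Scope ring_scope.

Theorem theorem3p1 (R : rcfType) (n : nat) (e : rel 'I_n) (mu : R) :
  simple_graph e ->
  largest_eigenvalue (adjmx R e) mu ->
  - (1 / 2%:R) + Num.sqrt ((n%:R - 3%:R / 2%:R) ^+ 2 + 2%:R) < mu ->
  hamilton_connected e \/ isomorphic e (@Kn1ee n).
Proof.
move=> [sym irr] [eig _] HT.
have [x [Heig [u [Hmax xu0]]]] := eigvec sym eig.
have Th := thresh HT.
set D := Dsum e.
have St : mu ^+ 2 + mu <= (D%:R : R).
  have := key (c := -1) Heig Hmax xu0.
  rewrite !mulN1r !opprK sumR_SN -natrD => H.
  apply: le_trans (H _) _.
    move=> w; apply: le_trans (_ : 0 <= _); first by rewrite mulN1r oppr_le0.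
    by apply: sumr_ge0 => k _; rewrite mulr_ge0.
  by rewrite ler_nat SN_bound.
have HD : (n * n + 5 <= D + 3 * n)%N.
  have : ((n * n + 4)%:R < (D + 3 * n)%:R :> R).
    rewrite !natrD !natrM; rewrite expr2 in Th; lra.
  rewrite ltr_nat; lia.
have De : D = D./2.*2.
  by have := odd_double_half D; rewrite (negbTE (Dsum_even sym irr)) add0n.
have Ne : (n * n + n = (n * n + n)./2.*2)%N.
  have := odd_double_half (n * n + n); rewrite oddD oddM.
  by case: (odd n) => /=; rewrite add0n.
rewrite -!addnn in De Ne.
have HD6 : (n * n + 6 <= D + 3 * n)%N by lia.
have n3 : (3 <= n)%N.
  have := Dsum_le irr; rewrite -/D; have := nn1 n; lia.
case: (leqP (n * n + 8) (D + 3 * n)) => Hbig.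
  left; apply: (ore sym irr) => a b ab nab.
  have := two_bound sym irr ab; rewrite (negbTE nab) muln0 addn0 -/D => h.
  have := id23 n3; lia.
have HDe : (D + 3 * n = n * n + 6)%N by lia.
case: (pickP (fun z => deg e z <= 2)%N) => [z dz | H3'].
  right.
  have := one_bound sym irr z; rewrite -/D => h1.
  have i12 := id12 (ltnW n3).
  have dz2 : deg e z = 2%N by move: dz => /= dz; lia.
  have Hcl : forall a b, a != z -> b != z -> a != b -> e a b.
    move=> a b az bz ab; apply/negPn/negP => nab.
    have := one_bound_strict sym irr az bz ab nab; rewrite -/D; lia.
  have := deg_card e z; rewrite dz2 => /esym/eqP/cards2P [y [y' [yy' Eset]]].
  apply: (iso_case (x := z) (y := y) (z := y') sym irr yy' _ Hcl).
  move=> j; have <- : (j \in [set j | e z j]) = e z j by rewrite inE.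
  by rewrite Eset in_set2.
have H3 : forall k, (3 <= deg e k)%N.
  by move=> k; move: (H3' k) => /= /negbT; rewrite -ltnNge.
have n5 : (5 <= n)%N.
  have := Dsum_ge H3; rewrite -/D => h.
  case: (ltnP n 5) => // hn.
  have : n = 3%N \/ n = 4%N by lia.
  by case=> En; rewrite En in HDe h; lia.
have N5 : (5 : R) <= n%:R by rewrite (ler_nat R 5 n).
case: (eqVneq (deg e u) n.-1) => [Hu1 | Hu1].
  have Hall : forall k, k != u -> e u k.
    move=> k ku; apply/negPn/negP => nuk; have := deg_lt2 irr ku nuk; rewrite Hu1; lia.
  have := key (c := 2) Heig Hmax xu0; rewrite sumR_SN => H.
  have {}H : mu ^+ 2 - 2 * mu <= (SN e u)%:R - 2 * (deg e u)%:R.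
    apply: H => w; rewrite sumR_C -(natrM R 2) ler_nat.
    have := univ_common sym irr Hall w; have := H3 w.
    by case: (e u w) => /=; lia.
  have := SN_univ irr Hall; rewrite -/D => hs.
  have hn : (SN e u + 6 * n = n * n + 9 + 2 * deg e u)%N by lia.
  have : ((SN e u + 6 * n)%:R = (n * n + 9 + 2 * deg e u)%:R :> R) by rewrite hn.
  rewrite !natrD !natrM => hR.
  apply: False_ind; apply: (contra_univ N5 Th); rewrite expr2; lra.
have Hu2 : (deg e u <= n - 2)%N.
  have := deg_le irr u; move: Hu1 => /eqP; lia.
have := key (c := 1) Heig Hmax xu0; rewrite sumR_SN => H.
have {}H : mu ^+ 2 - 1 * mu <= (SN e u)%:R - 1 * (deg e u)%:R.
  apply: H => w; rewrite mul1r sumR_C ler_nat.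
  case E: (e u w) => //=.
  have uw : u != w by apply/eqP => Ew; rewrite Ew irr in E.
  have := two_bound sym irr uw; rewrite E muln1 -/D => h.
  have := common u w sym; have := id23 n3; move=> i23 hc.
  have [S0|Spos] := posnP (\sum_(k < n) (e u k * e k w))%N; last by move: Spos.
  rewrite S0 in hc; lia.
have := SN_nonuniv u irr H3; rewrite -/D => hs.
have hn : (SN e u + 5 * n <= n * n + 7 + deg e u)%N by lia.
have : ((SN e u + 5 * n)%:R <= (n * n + 7 + deg e u)%:R :> R) by rewrite ler_nat.
rewrite !natrD !natrM => hR.
apply: False_ind; apply: (contra_nonuniv N5 Th); rewrite expr2; lra.
Qed.

Local Close Scope ring_scope.
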